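(* In the $\mathbf N$-agent system described in the context, let $\{\boldsymbol\mu_t^{\mathbf N}\}_{t\ge0}$ be the empirical joint state distributions induced by a policy $\boldsymbol\pi=\{\boldsymbol\pi_t\}_{t\ge0}$. Then for every $t\ge0$, $$\mathbb E\big|\boldsymbol\mu_{t+1}^{\mathbf N}-P^{\mathrm{MF}}(\boldsymbol\mu_t^{\mathbf N},\boldsymbol\pi_t)\big|_1\le C_P\sqrt{|\mathcal X||\mathcal U|}\frac1{N_{\mathrm{pop}}}\Big(\sum_{k\in[K]}\sqrt{N_k}\Big),$$ where $C_P=2+L_P$.
   Context: Fix $K\ge1$, $N_1,\dots,N_K\ge1$, $[K]=\{1,\dots,K\}$, $N_{\mathrm{pop}}=\sum_kN_k$, finite sets $\mathcal X,\mathcal U$, $\mathcal P(A)$ the probability distributions on $A$, $|\cdot|_1$ the $L_1$ norm, $L_P>0$. Agent $j\in[N_k]$ of class $k$ has state $x_{j,k}^t$ and action $u_{j,k}^t$; $\boldsymbol\mu_t^{\mathbf N}(x,k)=\frac1{N_{\mathrm{pop}}}\sum_{j=1}^{N_k}\mathbf 1(x_{j,k}^t=x)$, $\boldsymbol\nu_t^{\mathbf N}(u,k)=\frac1{N_{\mathrm{pop}}}\sum_{j=1}^{N_k}\mathbf 1(u_{j,k}^t=u)$. For each $k$, $P_k:\mathcal X\times\mathcal U\times\mathcal P(\mathcal X\times[K])\times\mathcal P(\mathcal U\times[K])\to\mathcal P(\mathcal X)$ satisfies $|P_k(x,u,\boldsymbol\mu_1,\boldsymbol\nu_1)-P_k(x,u,\boldsymbol\mu_2,\boldsymbol\nu_2)|_1\le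 L_P(|\boldsymbol\mu_1-\boldsymbol\mu_2|_1+|\boldsymbol\nu_1-\boldsymbol\nu_2|_1)$. A policy is $\boldsymbol\pi=\{\boldsymbol\pi_t\}_{t\ge0}$, $\boldsymbol\pi_t=(\pi_k^t)_k$, $\pi_k^t:\mathcal X\times\mathcal P(\mathcal X\times[K])\to\mathcal P(\mathcal U)$. Dynamics: conditioned on all states at time $t$, actions are independent across agents with $u_{j,k}^t\sim\pi_k^t(x_{j,k}^t,\boldsymbol\mu_t^{\mathbf N})$; conditioned on states and actions, next states are independent with $x_{j,k}^{t+1}\sim P_k(x_{j,k}^t,u_{j,k}^t,\boldsymbol\mu_t^{\mathbf N},\boldsymbol\nu_t^{\mathbf N})$. Mean-field: $\nu^{\mathrm{MF}}(\boldsymbol\mu,\boldsymbol\pi)(u,k)=\sum_x\pi_k(x,\boldsymbol\mu)(u)\boldsymbol\mu(x,k)$, $P^{\mathrm{MF}}(\boldsymbol\mu,\boldsymbol\pi)(x',k)=\sum_{x,u}\boldsymbol\mu(x,k)\pi_k(x,\boldsymbol\mu)(u)P_k(x,u,\boldsymbol\mu,\nu^{\mathrm{MF}}(\boldsymbol\mu,\boldsymbol\pi))(x')$. *)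

(* Defs.v *)
From HB Require Import structures.
From mathcomp Require Import all_boot all_order all_algebra.
From mathcomp Require Import reals.
Set Implicit Arguments. Unset Strict Implicit. Unset Printing Implicit Defensive.
Import Order.TTheory GRing.Theory Num.Theory.
Local Open Scope ring_scope.

Section MultiClassMF.
Variables (R : realType) (X U : finType) (K : nat) (N : 'I_K -> nat).

Definition agent := {k : 'I_K & 'I_(N k)}.
Definition cls (a : agent) : 'I_K := tag a.

Definition sconf := {ffun agent -> X}.
Definition aconf := {ffun agent -> U}.

Definition is_dist (A : finType) (p : {ffun A -> R}) : Prop :=
  (forall a, 0 <= p a) /\ \sum_a p a = 1.

Definition norm1 (A : finType) (p : {ffun A -> R}) : R := \sum_a `|p a|.

Definition Npop : nat := \sum_(k < K) N k.

Definition emp_mu (x : sconf) : {ffun X * 'I_K -> R} :=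
  [ffun p => (\sum_(a : agent | cls a == p.2) (x a == p.1)%:R) / Npop%:R].
Definition emp_nu (u : aconf) : {ffun U * 'I_K -> R} :=
  [ffun p => (\sum_(a : agent | cls a == p.2) (u a == p.1)%:R) / Npop%:R].

Definition kernelT := 'I_K -> X -> U -> {ffun X * 'I_K -> R} ->
  {ffun U * 'I_K -> R} -> {ffun X -> R}.
Definition policyT := 'I_K -> X -> {ffun X * 'I_K -> R} -> {ffun U -> R}.

Variables (P : kernelT) (pi : nat -> policyT).

Definition nu_MF (mu : {ffun X * 'I_K -> R}) (pit : policyT) : {ffun U * 'I_K -> R} :=
  [ffun p => \sum_x pit p.2 x mu p.1 * mu (x, p.2)].
Definition P_MF (mu : {ffun X * 'I_K -> R}) (pit : policyT) : {ffun X * 'I_K -> R} :=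
  [ffun p => \sum_x \sum_u mu (x, p.2) * pit p.2 x mu u *
                             P p.2 x u mu (nu_MF mu pit) p.1].

Definition act_prob (t : nat) (x : sconf) (u : aconf) : R :=
  \prod_a pi t (cls a) (x a) (emp_mu x) (u a).
Definition next_prob (x : sconf) (u : aconf) (x' : sconf) : R :=
  \prod_a P (cls a) (x a) (u a) (emp_mu x) (emp_nu u) (x' a).

Fixpoint law (init : {ffun sconf -> R}) (t : nat) : {ffun sconf -> R} :=
  match t with
  | 0 => init
  | t'.+1 => [ffun x' => \sum_x \sum_u
               law init t' x * act_prob t' x u * next_prob x u x']
  end.

Definition exp_dev (init : {ffun sconf -> R}) (t : nat) : R :=
  \sum_x \sum_u \sum_x'
    law init t x * act_prob t x u * next_prob x u x' *
    norm1 [ffun p => emp_mu x' p - P_MF (emp_mu x) (pi t) p].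

End MultiClassMF.

(* Main.v *)
Require Import Defs.
From HB Require Import structures.
From mathcomp Require Import all_boot all_order all_algebra.
From mathcomp Require Import reals.
From mathcomp Require Import ring lra.
Import Order.TTheory GRing.Theory Num.Theory.
Local Open Scope ring_scope.
Set Implicit Arguments. Unset Strict Implicit. Unset Printing Implicit Defensive.


Section Gen.
Variable R : realType.

Lemma cs_w (A : finType) (w h : A -> R) : (forall a, 0 <= w a) ->
  (\sum_a w a * h a) ^+ 2 <= (\sum_a w a) * (\sum_a w a * h a ^+ 2).
Proof.
move=> w0.
have H : 0 <= \sum_a \sum_b w a * w b * (h a - h b) ^+ 2.
  by apply: sumr_ge0 => a _; apply: sumr_ge0 => b _; rewrite mulr_ge0 ?sqr_ge0 // mulr_ge0.
have E : \sum_a \sum_b w a * w b * (h a - h b) ^+ 2 =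
   \sum_a \sum_b (w b * (w a * h a ^+ 2)) + \sum_a \sum_b (w a * (w b * h b ^+ 2))
   - 2 * \sum_a \sum_b ((w a * h a) * (w b * h b)).
  rewrite mulr_sumr -big_split -sumrB /=; apply: eq_bigr => a _.
  rewrite mulr_sumr -big_split -sumrB /=; apply: eq_bigr => b _.
  ring.
have E1 : \sum_a \sum_b (w b * (w a * h a ^+ 2)) = (\sum_a w a) * (\sum_a w a * h a ^+ 2).
  by rewrite mulr_sumr; apply: eq_bigr => a _; rewrite -mulr_suml mulrC.
have E2 : \sum_a \sum_b (w a * (w b * h b ^+ 2)) = (\sum_a w a) * (\sum_a w a * h a ^+ 2).
  by rewrite mulr_suml; apply: eq_bigr => a _; rewrite -mulr_sumr.
have E3 : \sum_a \sum_b ((w a * h a) * (w b * h b)) = (\sum_a w a * h a) ^+ 2.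
  by rewrite expr2 mulr_suml; apply: eq_bigr => a _; rewrite -mulr_sumr.
move: H; rewrite E E1 E2 E3.
move=> H; nra.
Qed.

Lemma jensen (A : finType) (w h : A -> R) : (forall a, 0 <= w a) ->
  \sum_a w a = 1 -> (\sum_a w a * h a) ^+ 2 <= \sum_a w a * h a ^+ 2.
Proof. by move=> w0 w1; have := cs_w h w0; rewrite w1 mul1r. Qed.

Lemma cs (A : finType) (s : A -> R) :
  (\sum_a s a) ^+ 2 <= #|A|%:R * \sum_a s a ^+ 2.
Proof.
have := @cs_w A (fun _ => 1) s (fun _ => ler01).
have e1 : forall f : A -> R, \sum_a 1 * f a = \sum_a f a.
  by move=> f; apply: eq_bigr => a _; rewrite mul1r.
rewrite !e1 sumr_const; apply.
Qed.

Lemma le_sqrt_of (a b : R) : 0 <= a -> a ^+ 2 <= b -> a <= Num.sqrt b.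
Proof.
move=> a0 ab; rewrite -(ger0_norm a0) -sqrtr_sqr ler_sqrt //.
exact: le_trans (sqr_ge0 a) ab.
Qed.

End Gen.


Section Prod.
Variables (R : realType) (I T : finType) (q : I -> T -> R).
Hypothesis q0 : forall i z, 0 <= q i z.
Hypothesis q1 : forall i, \sum_z q i z = 1.

Definition W (f : {ffun I -> T}) := \prod_i q i (f i).

Lemma W_ge0 f : 0 <= W f.
Proof. by apply: prodr_ge0. Qed.

Lemma prodE (w : I -> T -> R) :
  \sum_(f : {ffun I -> T}) W f * \prod_i w i (f i) = \prod_i \sum_z q i z * w i z.
Proof.
rewrite bigA_distr_bigA; apply: eq_bigr => f _; by rewrite /W -big_split.
Qed.

Lemma W_sum1 : \sum_f W f = 1.
Proof.
have := prodE (fun _ _ => 1).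
rewrite (eq_bigr (fun f => W f)) => [->|f _]; last by rewrite big1 ?mulr1.
by rewrite big1 // => i _; rewrite (eq_bigr (fun z => q i z)) // => z _; rewrite mulr1.
Qed.

Lemma E1 a (h : T -> R) : \sum_f W f * h (f a) = \sum_z q a z * h z.
Proof.
transitivity (\prod_i \sum_z q i z * (if i == a then h z else 1)).
  rewrite -prodE; apply: eq_bigr => f _; congr (_ * _).
  by rewrite (bigD1 a) //= eqxx big1 ?mulr1 // => i /negbTE ->.
rewrite (bigD1 a) //= eqxx [X in _ * X]big1 ?mulr1 // => i /negbTE ->.
by rewrite (eq_bigr (fun z => q i z)) // => z _; rewrite mulr1.
Qed.

Lemma E2 a b (h h' : T -> R) : a != b ->
  \sum_f W f * (h (f a) * h' (f b)) = (\sum_z q a z * h z) * (\sum_z q b z * h' z).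
Proof.
move=> ab; have ba : (b == a) = false by rewrite eq_sym (negbTE ab).
transitivity (\prod_i \sum_z q i z * (if i == a then h z else if i == b then h' z else 1)).
  rewrite -prodE; apply: eq_bigr => f _; congr (_ * _).
  rewrite (bigD1 a) //= eqxx (bigD1 b) ?ba //= ?eqxx big1 ?mulr1 //.
  by move=> i /andP [ia ib]; rewrite (negbTE ia) (negbTE ib).
rewrite (bigD1 a) //= eqxx (bigD1 b) ?ba //= ?eqxx [X in _ * (_ * X)]big1 ?mulr1 //.
move=> i /andP [ia ib]; rewrite (negbTE ia) (negbTE ib).
by rewrite (eq_bigr (fun z => q i z)) // => z _; rewrite mulr1.
Qed.

Lemma var_aux (A : finType) (w h : A -> R) (m : R) :
  \sum_a w a * (h a - m) ^+ 2 =
  \sum_a w a * h a ^+ 2 - (2 * m) * (\sum_a w a * h a) + m ^+ 2 * \sum_a w a.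
Proof.
rewrite [_ * (\sum_a w a * h a)]mulr_sumr [m ^+ 2 * _]mulr_sumr -sumrB -big_split /=.
by apply: eq_bigr => a _; ring.
Qed.

Lemma var_eq (A : finType) (w h : A -> R) : \sum_a w a = 1 ->
  \sum_a w a * (h a - \sum_b w b * h b) ^+ 2 =
  \sum_a w a * h a ^+ 2 - (\sum_b w b * h b) ^+ 2.
Proof. by move=> w1; rewrite var_aux w1; ring. Qed.

Lemma conc (S : pred I) (g : I -> T -> R) :
  \sum_f W f * `|\sum_(i | S i) (g i (f i) - \sum_z q i z * g i z)|
  <= Num.sqrt (\sum_(i | S i) \sum_z q i z * g i z ^+ 2).
Proof.
set D := fun i z => g i z - \sum_z q i z * g i z.
have V : \sum_f W f * (\sum_(i | S i) D i (f i)) ^+ 2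
         <= \sum_(i | S i) \sum_z q i z * g i z ^+ 2.
  have -> : \sum_f W f * (\sum_(i | S i) D i (f i)) ^+ 2 =
      \sum_(i | S i) \sum_(j | S j) \sum_f W f * (D i (f i) * D j (f j)).
    transitivity (\sum_f \sum_(i | S i) \sum_(j | S j) W f * (D i (f i) * D j (f j))).
      apply: eq_bigr => f _; rewrite expr2 mulr_suml mulr_sumr; apply: eq_bigr => i _.
      by rewrite mulr_sumr mulr_sumr; apply: eq_bigr => j _; rewrite mulrA.
    by rewrite exchange_big /=; apply: eq_bigr => i _; exact: exchange_big.
  apply: ler_sum => i Si.
  rewrite (bigD1 i) //= [X in _ + X]big1 ?addr0; last first.
    move=> j /andP [_ ji].
    rewrite E2 1?eq_sym // /D.
    rewrite (eq_bigr (fun z => q i z * g i z - (\sum_z q i z * g i z) * q i z)); last first.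
      by move=> z _; ring.
    by rewrite sumrB -mulr_sumr q1 mulr1 subrr mul0r.
  rewrite (eq_bigr (fun f => W f * (D i (f i)) ^+ 2)); last by move=> f _; rewrite expr2.
  rewrite (E1 i (fun z => D i z ^+ 2)) /D var_eq //.
  by rewrite lerBlDr lerDl sqr_ge0.
have J := @jensen R _ W (fun f => `|\sum_(i | S i) D i (f i)|) W_ge0 W_sum1.
apply: le_sqrt_of; first by apply: sumr_ge0 => f _; rewrite mulr_ge0 ?W_ge0.
apply: le_trans J _; apply: le_trans V; apply: ler_sum => f _.
by rewrite real_normK ?num_real.
Qed.

Lemma conc_sum (Y : finType) (S : pred I) (g : I -> Y -> T -> R) :
  (forall i z, \sum_y g i y z ^+ 2 <= 1) ->
  \sum_f W f * \sum_y `|\sum_(i | S i) (g i y (f i) - \sum_z q i z * g i y z)|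
  <= Num.sqrt (#|Y|%:R * \sum_(i | S i) 1).
Proof.
move=> g1.
set V := fun y => \sum_(i | S i) \sum_z q i z * g i y z ^+ 2.
have -> : \sum_f W f * \sum_y `|\sum_(i | S i) (g i y (f i) - \sum_z q i z * g i y z)|
   = \sum_y \sum_f W f * `|\sum_(i | S i) (g i y (f i) - \sum_z q i z * g i y z)|.
  by rewrite exchange_big /=; apply: eq_bigr => f _; rewrite mulr_sumr.
apply: le_trans (_ : \sum_y Num.sqrt (V y) <= _).
  by apply: ler_sum => y _; apply: conc.
apply: le_sqrt_of; first by apply: sumr_ge0 => y _; apply: sqrtr_ge0.
apply: le_trans (cs _) _; apply: ler_wpM2l; first by rewrite ler0n.
have V0 : forall y, 0 <= V y.
  by move=> y; apply: sumr_ge0 => i _; apply: sumr_ge0 => z _; rewrite mulr_ge0 ?sqr_ge0.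
rewrite (eq_bigr V); last by move=> y _; rewrite sqr_sqrtr.
rewrite /V exchange_big /=; apply: ler_sum => i _.
rewrite exchange_big /= -(q1 i); apply: ler_sum => z _.
by rewrite -mulr_sumr ler_piMr.
Qed.

End Prod.


Section Model.
Variables (R : realType) (K : nat) (N : 'I_K -> nat).
Hypothesis NK : forall k, (0 < N k)%N.
Hypothesis K0 : (0 < K)%N.

Lemma part_cls (F : agent N -> R) :
  \sum_(a : agent N) F a = \sum_(k < K) \sum_(a : agent N | cls a == k) F a.
Proof. by rewrite (partition_big (@cls K N) xpredT). Qed.

Lemma card_class k : \sum_(a : agent N | cls a == k) (1 : R) = (N k)%:R.
Proof.
transitivity (\sum_(i < K | i == k) \sum_(j : 'I_(N i)) (1 : R)); last first.
  by rewrite big_pred1_eq sumr_const card_ord.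
by rewrite sig_big_dep; apply: eq_bigl => a; rewrite andbT.
Qed.

Lemma card_all : \sum_(a : agent N) (1 : R) = (Npop N)%:R.
Proof.
by rewrite part_cls /Npop natr_sum; apply: eq_bigr => k _; rewrite card_class.
Qed.

Lemma Npop_gt0 : (0 < Npop N)%N.
Proof.
rewrite /Npop (bigD1 (Ordinal K0)) //=; exact: leq_trans (NK _) (leq_addr _ _).
Qed.

Lemma Npop_gt0R : 0 < (Npop N)%:R :> R.
Proof. by rewrite ltr0n Npop_gt0. Qed.

Lemma sum_pair (Y : finType) (F : Y * 'I_K -> R) :
  \sum_p F p = \sum_(k < K) \sum_y F (y, k).
Proof. by rewrite [RHS]exchange_big pair_bigA; apply: eq_bigr => -[]. Qed.

Lemma reidx (Y : finType) (v : agent N -> Y) k (G : Y -> R) :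
  \sum_y (\sum_(a : agent N | cls a == k) (v a == y)%:R) * G y =
  \sum_(a : agent N | cls a == k) G (v a).
Proof.
under eq_bigr => y _ do rewrite mulr_suml.
rewrite exchange_big /=; apply: eq_bigr => a _.
rewrite (bigD1 (v a)) //= eqxx mul1r big1 ?addr0 // => y /negbTE.
by rewrite eq_sym => ->; rewrite mul0r.
Qed.

Lemma emp_dist (Y : finType) (v : agent N -> Y) :
  @is_dist R _ [ffun p : Y * 'I_K =>
     (\sum_(a : agent N | cls a == p.2) (v a == p.1)%:R) / (Npop N)%:R].
Proof.
split.
  move=> p; rewrite ffunE divr_ge0 ?ler0n //; exact: sumr_ge0.
rewrite sum_pair.
under eq_bigr => k _ do (under eq_bigr => y _ do rewrite ffunE /=; rewrite reidx).
rewrite -(part_cls (fun _ => (Npop N)%:R^-1)).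
rewrite -[X in \sum_a X]mul1r -mulr_suml card_all mulfV //.
by rewrite gt_eqF // Npop_gt0R.
Qed.

End Model.


Section Dist.
Variable R : realType.

Lemma dist_le1 (A : finType) (p : {ffun A -> R}) a : is_dist p -> p a <= 1.
Proof.
case=> p0 p1; rewrite -p1 (bigD1 a) //= lerDl; exact: sumr_ge0.
Qed.

Lemma dist_sq (A : finType) (p : {ffun A -> R}) : is_dist p -> \sum_a p a ^+ 2 <= 1.
Proof.
move=> d; case: (d) => p0 p1; rewrite -[X in _ <= X]p1; apply: ler_sum => a _.
by rewrite expr2 ler_piMr // dist_le1.
Qed.

Lemma sum_delta (A : finType) (f : A -> R) y : \sum_z f z * (z == y)%:R = f y.
Proof.
rewrite (bigD1 y) //= eqxx mulr1 big1 ?addr0 // => z /negbTE ->; by rewrite mulr0.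
Qed.

Lemma sq_delta (A : finType) (z : A) : \sum_y ((z == y)%:R : R) ^+ 2 <= 1.
Proof.
rewrite (bigD1 z) //= eqxx big1 ?addr0 ?expr1n // => y.
by rewrite eq_sym => /negbTE ->; rewrite expr0n.
Qed.

End Dist.

Section Main.
Variables (R : realType) (X U : finType) (K : nat) (N : 'I_K -> nat)
  (L_P : R) (P : kernelT R X U K) (pi : nat -> policyT R X U K).
Hypothesis K0 : (0 < K)%N.
Hypothesis NK : forall k, (0 < N k)%N.
Hypothesis LP0 : 0 < L_P.
Hypothesis HP : forall k x u mu nu, is_dist mu -> is_dist nu -> is_dist (P k x u mu nu).
Hypothesis HL : forall k x u mu1 nu1 mu2 nu2,
      is_dist mu1 -> is_dist nu1 -> is_dist mu2 -> is_dist nu2 ->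
      norm1 [ffun y => P k x u mu1 nu1 y - P k x u mu2 nu2 y]
      <= L_P * (norm1 [ffun p => mu1 p - mu2 p] + norm1 [ffun p => nu1 p - nu2 p]).
Hypothesis Hpi : forall t k x mu, is_dist mu -> is_dist (pi t k x mu).

Local Notation NP := ((Npop N)%:R : R).

Lemma mu_dist (x : sconf X N) : is_dist (emp_mu R x).
Proof. exact: emp_dist. Qed.

Lemma nu_dist (u : aconf U N) : is_dist (emp_nu R u).
Proof. exact: emp_dist. Qed.

Lemma nuM_dist t (mu : {ffun X * 'I_K -> R}) : is_dist mu -> is_dist (nu_MF mu (pi t)).
Proof.
move=> d; case: (d) => m0 m1; split.
  move=> p; rewrite ffunE; apply: sumr_ge0 => x _; rewrite mulr_ge0 //.
  by case: (Hpi t p.2 x d) => h _; apply: h.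
rewrite sum_pair -m1 sum_pair; apply: eq_bigr => k _.
under eq_bigr => u _ do rewrite ffunE /=.
rewrite exchange_big /=; apply: eq_bigr => x _.
by rewrite -mulr_suml; case: (Hpi t k x d) => _ ->; rewrite mul1r.
Qed.

Definition qA (x : sconf X N) (u : aconf U N) a z :=
  P (cls a) (x a) (u a) (emp_mu R x) (emp_nu R u) z.
Definition qU t (x : sconf X N) a z := pi t (cls a) (x a) (emp_mu R x) z.
Definition nuM t (x : sconf X N) := nu_MF (emp_mu R x) (pi t).

Lemma qA0 x u a z : 0 <= qA x u a z.
Proof. by case: (HP (cls a) (x a) (u a) (mu_dist x) (nu_dist u)) => h _; apply: h. Qed.
Lemma qA1 x u a : \sum_z qA x u a z = 1.
Proof. by case: (HP (cls a) (x a) (u a) (mu_dist x) (nu_dist u)) => _ h; apply: h. Qed.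
Lemma qU0 t x a z : 0 <= qU t x a z.
Proof. by case: (Hpi t (cls a) (x a) (mu_dist x)) => h _; apply: h. Qed.
Lemma qU1 t x a : \sum_z qU t x a z = 1.
Proof. by case: (Hpi t (cls a) (x a) (mu_dist x)) => _ h; apply: h. Qed.

Lemma act_sum t (x : sconf X N) : \sum_u act_prob pi t x u = 1.
Proof. exact: (W_sum1 (qU1 t x)). Qed.
Lemma next_sum (x : sconf X N) (u : aconf U N) : \sum_x' next_prob P x u x' = 1.
Proof. exact: (W_sum1 (qA1 x u)). Qed.
Lemma act_ge0 t (x : sconf X N) (u : aconf U N) : 0 <= act_prob pi t x u.
Proof. exact: (W_ge0 (qU0 t x)). Qed.
Lemma next_ge0 (x : sconf X N) (u : aconf U N) (x' : sconf X N) : 0 <= next_prob P x u x'.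
Proof. exact: (W_ge0 (qA0 x u)). Qed.


Lemma NP_gt0 : 0 < NP.
Proof. exact: Npop_gt0R. Qed.

Lemma PMF_eq t (x : sconf X N) y k :
  P_MF P (emp_mu R x) (pi t) (y, k) =
  (\sum_(a : agent N | cls a == k)
     \sum_z qU t x a z * P (cls a) (x a) z (emp_mu R x) (nuM t x) y) / NP.
Proof.
rewrite ffunE /=.
transitivity (\sum_x0 (\sum_(a : agent N | cls a == k) (x a == x0)%:R) *
   (NP^-1 * \sum_u0 pi t k x0 (emp_mu R x) u0 * P k x0 u0 (emp_mu R x) (nuM t x) y)).
  apply: eq_bigr => x0 _; rewrite mulrA mulr_sumr; apply: eq_bigr => u0 _.
  by rewrite ffunE /= mulrA.
rewrite reidx -mulr_sumr mulrC; congr (_ * _); apply: eq_bigr => a /eqP <-.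
done.
Qed.

Lemma nuM_eq t (x : sconf X N) u' k :
  nuM t x (u', k) = (\sum_(a : agent N | cls a == k) qU t x a u') / NP.
Proof.
rewrite /nuM ffunE /=.
transitivity (\sum_x0 (\sum_(a : agent N | cls a == k) (x a == x0)%:R) *
   (NP^-1 * pi t k x0 (emp_mu R x) u')).
  by apply: eq_bigr => x0 _; rewrite ffunE /= mulrC mulrA.
rewrite reidx -mulr_sumr mulrC; congr (_ * _); apply: eq_bigr => a /eqP <-.
done.
Qed.


Definition TA (x : sconf X N) (u : aconf U N) (x' : sconf X N) :=
  \sum_(k < K) \sum_(y : X) `|\sum_(a : agent N | cls a == k)
      ((x' a == y)%:R - \sum_z qA x u a z * (z == y)%:R)|.
Definition TB t (x : sconf X N) (u : aconf U N) :=
  \sum_(k < K) \sum_(y : X) `|\sum_(a : agent N | cls a == k)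
      (P (cls a) (x a) (u a) (emp_mu R x) (emp_nu R u) y -
       P (cls a) (x a) (u a) (emp_mu R x) (nuM t x) y)|.
Definition TC t (x : sconf X N) (u : aconf U N) :=
  \sum_(k < K) \sum_(y : X) `|\sum_(a : agent N | cls a == k)
      (P (cls a) (x a) (u a) (emp_mu R x) (nuM t x) y -
       \sum_z qU t x a z * P (cls a) (x a) z (emp_mu R x) (nuM t x) y)|.
Definition TU t (x : sconf X N) (u : aconf U N) :=
  \sum_(k < K) \sum_(y : U) `|\sum_(a : agent N | cls a == k)
      ((u a == y)%:R - \sum_z qU t x a z * (z == y)%:R)|.

Lemma decomp t (x : sconf X N) (u : aconf U N) (x' : sconf X N) :
  norm1 [ffun p => emp_mu R x' p - P_MF P (emp_mu R x) (pi t) p]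
  <= (TA x u x' + TB t x u + TC t x u) / NP.
Proof.
rewrite /norm1 sum_pair /TA /TB /TC -!big_split /= mulr_suml; apply: ler_sum => k _.
rewrite -!big_split mulr_suml; apply: ler_sum => y _ /=.
rewrite ffunE /= PMF_eq ffunE /= -mulrBl normrM (ger0_norm (_ : 0 <= NP^-1)) ?invr_ge0 ?ler0n //.
rewrite ler_wpM2r ?invr_ge0 ?ler0n //.
set A := \sum_(a | _) ((x' a == y)%:R - _).
set B := \sum_(a | _) (P _ _ _ _ (emp_nu R u) y - _).
set C := \sum_(a | _) (P _ _ _ _ (nuM t x) y - _).
have -> : \sum_(a : agent N | cls a == k) (x' a == y)%:R -
   \sum_(a : agent N | cls a == k) \sum_z qU t x a z * P (cls a) (x a) z (emp_mu R x) (nuM t x) y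
   = A + B + C.
  rewrite /A /B /C -!big_split -sumrB /=; apply: eq_bigr => a _.
  rewrite sum_delta /qA; ring.
by apply: le_trans (ler_normD _ _) _; rewrite lerD2r ler_normD.
Qed.


Lemma norm_nu t (x : sconf X N) (u : aconf U N) :
  norm1 [ffun p => emp_nu R u p - nuM t x p] = TU t x u / NP.
Proof.
rewrite /norm1 sum_pair /TU mulr_suml; apply: eq_bigr => k _.
rewrite mulr_suml; apply: eq_bigr => y _.
rewrite ffunE /= nuM_eq ffunE /= -mulrBl normrM (ger0_norm (_ : 0 <= NP^-1)) ?invr_ge0 ?ler0n //.
congr (`| _ | * _); rewrite -sumrB; apply: eq_bigr => a _; by rewrite sum_delta.
Qed.

Lemma TB_le t (x : sconf X N) (u : aconf U N) : TB t x u <= L_P * TU t x u.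
Proof.
set F := fun a y => P (cls a) (x a) (u a) (emp_mu R x) (emp_nu R u) y -
       P (cls a) (x a) (u a) (emp_mu R x) (nuM t x) y.
have s1 : TB t x u <= \sum_(a : agent N) \sum_(y : X) `|F a y|.
  rewrite /TB (part_cls (fun a => \sum_(y : X) `|F a y|)); apply: ler_sum => k _.
  rewrite [leRHS]exchange_big /=; apply: ler_sum => y _; exact: ler_norm_sum.
apply: le_trans s1 _.
have s2 : forall a, \sum_(y : X) `|F a y| <= L_P * (TU t x u / NP).
  move=> a; rewrite -norm_nu.
  have := HL (cls a) (x a) (u a) (mu_dist x) (nu_dist u) (mu_dist x) (nuM_dist t (mu_dist x)).
  have -> : norm1 [ffun p => emp_mu R x p - emp_mu R x p] = 0.
    by rewrite /norm1 big1 // => p _; rewrite ffunE subrr normr0.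
  rewrite add0r /norm1; congr (_ <= _); apply: eq_bigr => y _; by rewrite ffunE.
apply: le_trans (ler_sum _ (fun a _ => s2 a)) _.
rewrite -[X in \sum_a X]mul1r -mulr_suml card_all.
have nz : NP != 0 by exact: lt0r_neq0 NP_gt0.
rewrite le_eqVlt; apply/orP; left; apply/eqP; field; exact: nz.
Qed.


Lemma TA_exp (x : sconf X N) (u : aconf U N) :
  \sum_x' next_prob P x u x' * TA x u x' <= \sum_(k < K) Num.sqrt (#|X|%:R * (N k)%:R).
Proof.
rewrite /TA; under eq_bigr do rewrite mulr_sumr.
rewrite exchange_big; apply: ler_sum => k _.
have H := (conc_sum (qA0 x u) (qA1 x u) (fun a => cls a == k)
          (g := fun (a : agent N) (y z : X) => ((z == y)%:R : R)) (fun a z => sq_delta R z)).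
move: H; rewrite card_class => H; apply: (le_trans _ H).
by rewrite le_eqVlt; apply/orP; left; apply/eqP; apply: eq_bigr.
Qed.

Lemma TU_exp t (x : sconf X N) :
  \sum_u act_prob pi t x u * TU t x u <= \sum_(k < K) Num.sqrt (#|U|%:R * (N k)%:R).
Proof.
rewrite /TU; under eq_bigr do rewrite mulr_sumr.
rewrite exchange_big; apply: ler_sum => k _.
have H := (conc_sum (qU0 t x) (qU1 t x) (fun a => cls a == k)
          (g := fun (a : agent N) (y z : U) => ((z == y)%:R : R)) (fun a z => sq_delta R z)).
move: H; rewrite card_class => H; apply: (le_trans _ H).
by rewrite le_eqVlt; apply/orP; left; apply/eqP; apply: eq_bigr.
Qed.

Lemma TC_exp t (x : sconf X N) :
  \sum_u act_prob pi t x u * TC t x u <= \sum_(k < K) Num.sqrt (#|X|%:R * (N k)%:R).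
Proof.
rewrite /TC; under eq_bigr do rewrite mulr_sumr.
rewrite exchange_big; apply: ler_sum => k _.
have H := (conc_sum (qU0 t x) (qU1 t x) (fun a => cls a == k)
          (g := fun (a : agent N) (y : X) (z : U) => P (cls a) (x a) z (emp_mu R x) (nuM t x) y)
          (fun a z => dist_sq (HP (cls a) (x a) z (mu_dist x) (nuM_dist t (mu_dist x))))).
move: H; rewrite card_class => H; apply: (le_trans _ H).
by rewrite le_eqVlt; apply/orP; left; apply/eqP; apply: eq_bigr.
Qed.


Lemma per_x t (x : sconf X N) :
  \sum_u \sum_x' act_prob pi t x u * next_prob P x u x' *
     norm1 [ffun p => emp_mu R x' p - P_MF P (emp_mu R x) (pi t) p]
  <= (\sum_(k < K) Num.sqrt (#|X|%:R * (N k)%:R) +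
      L_P * \sum_(k < K) Num.sqrt (#|U|%:R * (N k)%:R) +
      \sum_(k < K) Num.sqrt (#|X|%:R * (N k)%:R)) / NP.
Proof.
set SX := \sum_(k < K) Num.sqrt (#|X|%:R * (N k)%:R).
set SU := \sum_(k < K) Num.sqrt (#|U|%:R * (N k)%:R).
have h1 : forall u, \sum_x' act_prob pi t x u * next_prob P x u x' *
     norm1 [ffun p => emp_mu R x' p - P_MF P (emp_mu R x) (pi t) p]
   <= act_prob pi t x u / NP * (SX + L_P * TU t x u + TC t x u).
  move=> u.
  apply: (le_trans (_ : _ <= \sum_x' act_prob pi t x u * next_prob P x u x' *
            ((TA x u x' + TB t x u + TC t x u) / NP))).
    apply: ler_sum => x' _; apply: ler_wpM2l; last exact: decomp.
    by rewrite mulr_ge0 ?act_ge0 ?next_ge0.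
  have -> : \sum_x' act_prob pi t x u * next_prob P x u x' *
            ((TA x u x' + TB t x u + TC t x u) / NP) =
     act_prob pi t x u / NP * (\sum_x' next_prob P x u x' * TA x u x') +
     act_prob pi t x u / NP * (TB t x u + TC t x u) * \sum_x' next_prob P x u x'.
    rewrite !mulr_sumr -big_split /=; apply: eq_bigr => x' _; ring.
  rewrite next_sum mulr1 -mulrDr; apply: ler_wpM2l.
    by rewrite divr_ge0 ?act_ge0 ?ler0n.
  rewrite addrA; apply: lerD; last exact: lexx.
  apply: lerD; [exact: TA_exp | exact: TB_le].
apply: le_trans (ler_sum _ (fun u _ => h1 u)) _.
have -> : \sum_u act_prob pi t x u / NP * (SX + L_P * TU t x u + TC t x u) =
   (SX * \sum_u act_prob pi t x u + L_P * \sum_u act_prob pi t x u * TU t x u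
     + \sum_u act_prob pi t x u * TC t x u) / NP.
  rewrite [SX * _]mulr_sumr [L_P * _]mulr_sumr -!big_split mulr_suml /=.
  by apply: eq_bigr => u _; ring.
rewrite act_sum mulr1; apply: ler_wpM2r; first by rewrite invr_ge0 ler0n.
apply: lerD; last exact: TC_exp.
apply: lerD; first exact: lexx.
by apply: ler_wpM2l; [exact: ltW | exact: TU_exp].
Qed.


Lemma law_ok (init : {ffun sconf X N -> R}) : is_dist init ->
  forall t, (forall x, 0 <= law P pi init t x) /\ \sum_x law P pi init t x = 1.
Proof.
move=> [i0 i1]; elim=> [|t [l0 l1]] //=.
split.
  move=> x'; rewrite ffunE; apply: sumr_ge0 => x _; apply: sumr_ge0 => u _.
  by rewrite !mulr_ge0 ?act_ge0 ?next_ge0.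
under eq_bigr do rewrite ffunE.
rewrite exchange_big /= -[RHS]l1; apply: eq_bigr => x _.
rewrite exchange_big /= -[RHS]mulr1 -(act_sum t x) mulr_sumr; apply: eq_bigr => u _.
by rewrite -mulr_sumr next_sum mulr1.
Qed.

Lemma final_bound t (x : sconf X N) :
  \sum_u \sum_x' act_prob pi t x u * next_prob P x u x' *
     norm1 [ffun p => emp_mu R x' p - P_MF P (emp_mu R x) (pi t) p]
  <= (2 + L_P) * Num.sqrt ((#|X| * #|U|)%:R) / (Npop N)%:R *
       \sum_(k < K) Num.sqrt ((N k)%:R).
Proof.
have Bge0 : 0 <= (2 + L_P) * Num.sqrt ((#|X| * #|U|)%:R) / (Npop N)%:R *
       \sum_(k < K) Num.sqrt ((N k)%:R).
  rewrite !mulr_ge0 ?sqrtr_ge0 ?invr_ge0 ?ler0n //; last by apply: sumr_ge0 => k _; exact: sqrtr_ge0.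
  by apply: addr_ge0 => //; exact: ltW.
pose a0 : agent N := existT _ (Ordinal K0) (Ordinal (NK (Ordinal K0))).
have [U0|Upos] := posnP #|U|.
  rewrite big1 // => u _; exfalso.
  by move: (card0_eq U0 (u a0)); rewrite inE.
have Xpos : (0 < #|X|)%N by apply/card_gt0P; exists (x a0).
apply: le_trans (per_x t x) _.
set SN := \sum_(k < K) Num.sqrt ((N k)%:R : R).
set s := Num.sqrt ((#|X| * #|U|)%:R : R).
have hX : \sum_(k < K) Num.sqrt (#|X|%:R * (N k)%:R) <= s * SN.
  rewrite /SN mulr_sumr; apply: ler_sum => k _.
  rewrite sqrtrM ?ler0n // ler_wpM2r ?sqrtr_ge0 // ler_sqrt ?ler0n // ler_nat.
  by rewrite leq_pmulr.
have hU : \sum_(k < K) Num.sqrt (#|U|%:R * (N k)%:R) <= s * SN.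
  rewrite /SN mulr_sumr; apply: ler_sum => k _.
  rewrite sqrtrM ?ler0n // ler_wpM2r ?sqrtr_ge0 // ler_sqrt ?ler0n // ler_nat.
  by rewrite leq_pmull.
rewrite mulrAC; apply: ler_wpM2r; first by rewrite invr_ge0 ler0n.
have LP := ltW LP0.
apply: le_trans (_ : s * SN + L_P * (s * SN) + s * SN <= _).
  by apply: lerD => //; apply: lerD => //; apply: ler_wpM2l.
by rewrite le_eqVlt; apply/orP; left; apply/eqP; ring.
Qed.

End Main.

Unset Implicit Arguments.
Set Strict Implicit.

Theorem lemma8 (R : realType) (X U : finType) (K : nat) (N : 'I_K -> nat)
  (L_P : R) (P : kernelT R X U K) (pi : nat -> policyT R X U K)
  (init : {ffun sconf X N -> R}) :
  (0 < K)%N ->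
  (forall k, 0 < N k)%N ->
  0 < L_P ->
  (* each P_k maps distributions to a distribution on X *)
  (forall k x u mu nu, is_dist mu -> is_dist nu -> is_dist (P k x u mu nu)) ->
  (* Lipschitz continuity of P_k in the mean-field arguments *)
  (forall k x u mu1 nu1 mu2 nu2,
      is_dist mu1 -> is_dist nu1 -> is_dist mu2 -> is_dist nu2 ->
      norm1 [ffun y => P k x u mu1 nu1 y - P k x u mu2 nu2 y]
      <= L_P * (norm1 [ffun p => mu1 p - mu2 p] + norm1 [ffun p => nu1 p - nu2 p])) ->
  (* each pi_k^t maps into distributions on U *)
  (forall t k x mu, is_dist mu -> is_dist (pi t k x mu)) ->
  (* arbitrary initial law of the joint state configuration *)
  is_dist init ->
  forall t : nat,
    exp_dev P pi init t
    <= (2 + L_P) * Num.sqrt ((#|X| * #|U|)%:R) / (Npop N)%:R *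
       \sum_(k < K) Num.sqrt ((N k)%:R).
Proof.
move=> K0 NK LP0 HP HL Hpi Hi t.
have [l0 l1] := law_ok K0 NK HP Hpi Hi t.
set B := (2 + L_P) * _ / _ * _.
have -> : exp_dev P pi init t = \sum_x law P pi init t x *
   (\sum_u \sum_x' act_prob pi t x u * next_prob P x u x' *
     norm1 [ffun p => emp_mu R x' p - P_MF P (emp_mu R x) (pi t) p]).
  rewrite /exp_dev; apply: eq_bigr => x _; rewrite mulr_sumr; apply: eq_bigr => u _.
  by rewrite mulr_sumr; apply: eq_bigr => x' _; rewrite !mulrA.
apply: le_trans (_ : \sum_x law P pi init t x * B <= _).
  apply: ler_sum => x _; apply: ler_wpM2l => //.
  exact: (final_bound K0 NK LP0 HP HL Hpi).
by rewrite -mulr_suml l1 mul1r.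
Qed.
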